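(* Let $H$ be a real Hilbert space, $I=\{1,\dots,M\}$, let $f_i,h_i,T_i$ ($i\in I$) satisfy Assumption (A1)–(A4) and the parameters satisfy Condition (C) (described below). Consider the sequences generated by the Distributed Accelerated Incremental Algorithm below, and assume that for each $i\in I$ the sequence $\{y^{(i)}_n\}$ is bounded. Then: (a) $\lim_{n\to\infty}\frac{\|x_{n+1}-x_n\|}{\lambda_n}=\lim_{n\to\infty}\|x_{n+1}-x_n\|=0$; (b) for every $\bar x\in S$ and $i\in I$ there exist constants $Q_1,Q_2\ge0$ such that for all $n$, $$\|w^{(i+1)}_n-\bar x\|^2\le\|w^{(i)}_n-\bar x\|^2+\theta_nQ_1+\alpha_nQ_2-(1-\alpha_n)\|T_i(y^{(i)}_n)-y^{(i)}_n\|^2-\|z^{(i)}_n-y^{(i)}_n\|^2+2\lambda_n\big(f_i(\bar x)-f_i(y^{(i)}_n)\big)+2\lambda_n\langle d^{(i)}_{n+1},y^{(i)}_n-\bar x\rangle.$$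
   Context: Assumption (A1): each $f_i:H\to\mathbb{R}$ is continuous and convex. (A2): each $h_i:H\to\mathbb{R}$ is convex and Fréchet differentiable, and $\nabla h_i$ is $(1/L_i)$-Lipschitz continuous for some $L_i>0$. (A3): each $T_i:H\to H$ is firmly nonexpansive, i.e. $\|T_ix-T_iy\|^2\le\langle T_ix-T_iy,x-y\rangle$ for all $x,y$. (A4): $S=\bigcap_{i=1}^M\mathrm{Fix}\,T_i\neq\emptyset$ and, with $\psi=\sum_{i=1}^M(f_i+h_i)$, $\Omega=\{\hat x\in S:\psi(\hat x)=\min_{x\in S}\psi(x)\}\neq\emptyset$. Condition (C): $\{\theta_n\},\{\lambda_n\},\{\beta_n\},\{\alpha_n\}$ are decreasing real sequences converging to $0$ with $\theta_n\in[0,1)$, $\lambda_n\in(0,2\min_{i\in I}L_i]$, $\beta_n\in(0,1]$, $\alpha_n\in(0,1]$, and: (C1) $\sum_n\alpha_n=\infty$; (C2) $\lim_n\frac{1}{\alpha_{n+1}}\big|\frac{1}{\lambda_{n+1}}-\frac{1}{\lambda_n}\big|=0$; (C3) $\lim_n\frac{1}{\lambda_{n+1}}\big|1-\frac{\alpha_n}{\alpha_{n+1}}\big|=0$; (C4) $\lim_n\frac{\alpha_n}{\lambda_n}=0$; (C5) $\lim_n\frac{\theta_n}{\alpha_{n+1}\lambda_{n+1}}=0$; (C6) $\frac{\lambda_n}{\lambda_{n+1}}\le\sigma$ for some $\sigma\ge1$; (C7) $\lim_n\frac{\beta_n}{\alpha_{n+1}}=0$. $\mathrm{prox}_{\lambda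 g}(x)=\arg\min_y\{g(y)+\frac{1}{2\lambda}\|x-y\|^2\}$. Distributed Accelerated Incremental Algorithm: choose $x_1\in H$, $w^{(i)}_0,z^{(i)}_0,u^{(i)}\in H$ and set $d^{(i)}_1=-\nabla h_i(z^{(i)}_0)$ ($i\in I$). For $n=1,2,\dots$: set $w^{(1)}_n=x_n$; for $i=1,\dots,M$ compute $z^{(i)}_n=w^{(i)}_n+\theta_n(w^{(i)}_n-w^{(i)}_{n-1})$, $d^{(i)}_{n+1}=-\nabla h_i(z^{(i)}_n)+\beta_nd^{(i)}_n$, $y^{(i)}_n=\mathrm{prox}_{\lambda_nf_i}(z^{(i)}_n+\lambda_nd^{(i)}_{n+1})$, $w^{(i+1)}_n=\alpha_nu^{(i)}+(1-\alpha_n)T_i(y^{(i)}_n)$; then set $x_{n+1}=w^{(M+1)}_n$. *)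

(* Defs.v *)
From HB Require Import structures.
From mathcomp Require Import all_boot all_order all_algebra.
From mathcomp Require Import all_classical all_reals all_analysis.
Set Implicit Arguments. Unset Strict Implicit. Unset Printing Implicit Defensive.
Import Order.TTheory GRing.Theory Num.Theory.
Import numFieldNormedType.Exports.
Local Open Scope classical_set_scope.
Local Open Scope ring_scope.

(* A real Hilbert space is represented by a complete normed space
   H : completeNormedModType R together with a function inner : H -> H -> R
   which is a symmetric bilinear form whose induced norm is the norm of H. *)
Definition is_inner_product (R : realType) (H : normedModType R)
  (inner : H -> H -> R) : Prop :=
  [/\ (forall x y, inner x y = inner y x),
      (forall (a : R) (x y z : H), inner (a *: x + y) z = a * inner x z + inner y z)
    & (forall x, `|x| ^+ 2 = inner x x)].

Definition convex_fun (R : realType) (H : normedModType R) (f : H -> R) : Prop :=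
  forall (x y : H) (t : R), 0 <= t -> t <= 1 ->
    f (t *: x + (1 - t) *: y) <= t * f x + (1 - t) * f y.

(* g is the (Riesz representative of the) Frechet derivative of h :
   h is Frechet differentiable at every x with derivative v |-> <g x, v>. *)
Definition frechet_gradient (R : realType) (H : normedModType R)
  (inner : H -> H -> R) (h : H -> R) (g : H -> H) : Prop :=
  forall x : H, forall eps : R, 0 < eps -> exists2 delta : R, 0 < delta &
    forall v : H, `|v| < delta ->
      `|h (x + v) - h x - inner (g x) v| <= eps * `|v|.

Definition lipschitz_with (R : realType) (H : normedModType R)
  (K : R) (g : H -> H) : Prop :=
  forall x y, `|g x - g y| <= K * `|x - y|.

Definition firmly_nonexpansive (R : realType) (H : normedModType R)
  (inner : H -> H -> R) (T : H -> H) : Prop :=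
  forall x y, `|T x - T y| ^+ 2 <= inner (T x - T y) (x - y).

Definition Fix (R : realType) (H : normedModType R) (T : H -> H) : set H :=
  [set x | T x = x].

Definition is_prox (R : realType) (H : normedModType R)
  (lam : R) (g : H -> R) (x y : H) : Prop :=
  forall z : H, g y + (2 * lam)^-1 * `|x - y| ^+ 2 <= g z + (2 * lam)^-1 * `|x - z| ^+ 2.

(* Main.v *)
Require Import Defs.
From HB Require Import structures.
From mathcomp Require Import all_boot all_order all_algebra.
From mathcomp Require Import all_classical all_reals all_analysis.
From mathcomp Require Import ring lra.
Import Order.TTheory GRing.Theory Num.Theory.
Import numFieldNormedType.Exports.
Local Open Scope classical_set_scope.
Local Open Scope ring_scope.

Set Implicit Arguments. Unset Strict Implicit. Unset Printing Implicit Defensive.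


Section IP.
Variables (R : realType) (H : normedModType R) (inner : H -> H -> R).
Hypothesis Hip : is_inner_product inner.

Lemma ipC x y : inner x y = inner y x.
Proof. by case: Hip. Qed.

Lemma ip_lin a x y z : inner (a *: x + y) z = a * inner x z + inner y z.
Proof. by case: Hip. Qed.

Lemma ip_nsq x : `|x| ^+ 2 = inner x x.
Proof. by case: Hip. Qed.

Lemma ip0l z : inner 0 z = 0.
Proof.
have := ip_lin 1 0 0 z; rewrite scaler0 addr0 mul1r; lra.
Qed.

Lemma ipDl x y z : inner (x + y) z = inner x z + inner y z.
Proof. by rewrite -[x]scale1r ip_lin mul1r scale1r. Qed.

Lemma ipZl a x z : inner (a *: x) z = a * inner x z.
Proof. by rewrite -[a *: x]addr0 ip_lin ip0l addr0. Qed.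

Lemma ipNl x z : inner (- x) z = - inner x z.
Proof. by rewrite -scaleN1r ipZl mulN1r. Qed.

Lemma ipBl x y z : inner (x - y) z = inner x z - inner y z.
Proof. by rewrite ipDl ipNl. Qed.

Lemma ipDr x y z : inner z (x + y) = inner z x + inner z y.
Proof. by rewrite ipC ipDl ipC (ipC y). Qed.

Lemma ipZr a x z : inner z (a *: x) = a * inner z x.
Proof. by rewrite ipC ipZl ipC. Qed.

Lemma ipNr x z : inner z (- x) = - inner z x.
Proof. by rewrite ipC ipNl ipC. Qed.

Lemma ipBr x y z : inner z (x - y) = inner z x - inner z y.
Proof. by rewrite ipDr ipNr. Qed.

Lemma ip0r z : inner z 0 = 0.
Proof. by rewrite ipC ip0l. Qed.

Lemma nsqD x y : `|x + y| ^+ 2 = `|x| ^+ 2 + 2 * inner x y + `|y| ^+ 2.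
Proof. rewrite !ip_nsq ipDl !ipDr (ipC y x); lra. Qed.

Lemma nsqB x y : `|x - y| ^+ 2 = `|x| ^+ 2 - 2 * inner x y + `|y| ^+ 2.
Proof. rewrite nsqD ipNr normrN; lra. Qed.

Lemma nsqZ (a : R) (x : H) : `|a *: x| ^+ 2 = a ^+ 2 * `|x| ^+ 2.
Proof. by rewrite normrZ exprMn real_normK ?num_real. Qed.

Lemma CS x y : inner x y <= `|x| * `|y|.
Proof.
have [->|nx0] := eqVneq x 0; first by rewrite ip0l normr0 mul0r.
have [->|ny0] := eqVneq y 0; first by rewrite ip0r normr0 mulr0.
have := nsqB (`|y| *: x) (`|x| *: y).
rewrite !nsqZ ipZl ipZr => E.
have H0 : 0 <= `|(`|y| *: x - `|x| *: y)| ^+ 2 by apply: sqr_ge0.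
rewrite E in H0.
have p : 0 < `|x| * `|y| by rewrite mulr_gt0 // normr_gt0.
have : `|x| * `|y| * inner x y <= `|x| * `|y| * (`|x| * `|y|) by nra.
by rewrite ler_pM2l.
Qed.

Lemma CSabs x y : `|inner x y| <= `|x| * `|y|.
Proof.
rewrite ler_norml CS andbT.
have := CS (- x) y; rewrite ipNl normrN; lra.
Qed.

End IP.


Section Ops.
Variables (R : realType) (H : normedModType R) (inner : H -> H -> R).
Hypothesis Hip : is_inner_product inner.

Lemma convcomb (t : R) (p q : H) : t *: p + (1 - t) *: q = q + t *: (p - q).
Proof. by rewrite scalerBl scale1r scalerBr addrCA. Qed.

Lemma le_of_sq (a b : R) : 0 <= a -> 0 <= b -> a ^+ 2 <= b ^+ 2 -> a <= b.
Proof. by move=> ha hb; rewrite ler_sqr ?nnegrE. Qed.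

Lemma le_small_t (A B C : R) :
  (forall t, 0 < t -> t <= 1 -> A <= B + t * C) -> A <= B.
Proof.
move=> hA; apply/ler_addgt0Pr => e e0.
have hC : 0 <= `|C| by [].
pose t := Num.min 1 (e / (`|C| + 1)).
have t0 : 0 < t by rewrite lt_min ltr01 divr_gt0 // ltr_pwDl.
have t1 : t <= 1 by rewrite ge_min lexx.
have t2 : t <= e / (`|C| + 1) by rewrite ge_min lexx orbT.
apply: (le_trans (hA t t0 t1)); rewrite lerD2l.
apply: (le_trans (ler_wpM2l (ltW t0) (ler_norm C))).
apply: (le_trans (ler_wpM2r hC t2)).
rewrite mulrAC ler_pdivrMr; last by rewrite ltr_wpDl.
by rewrite mulrDr mulr1 lerDl ltW.
Qed.

Lemma firm_nonexp (T : H -> H) : firmly_nonexpansive inner T ->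
  forall a b, `|T a - T b| <= `|a - b|.
Proof.
move=> hT a b.
have := hT a b; have := CS Hip (T a - T b) (a - b).
have [->|n0] := eqVneq (T a - T b) 0; first by rewrite normr0.
move=> h1 h2.
have p : 0 < `|T a - T b| by rewrite normr_gt0.
have : `|T a - T b| * `|T a - T b| <= `|T a - T b| * `|a - b| by rewrite -expr2; lra.
by rewrite ler_pM2l.
Qed.

Lemma firm_fix (T : H -> H) : firmly_nonexpansive inner T ->
  forall a p, T p = p -> `|T a - p| ^+ 2 <= `|a - p| ^+ 2 - `|T a - a| ^+ 2.
Proof.
move=> hT a p Tp.
have := hT a p; rewrite Tp => h.
have : T a - a = (T a - p) - (a - p) by rewrite opprB addrA subrK.
move=> ->; rewrite [X in _ <= _ - X](nsqB Hip); lra.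
Qed.

Lemma prox_var (lam : R) (g : H -> R) (a yv : H) :
  0 < lam -> convex_fun g -> is_prox lam g a yv ->
  forall p, inner (a - yv) (p - yv) <= lam * (g p - g yv).
Proof.
move=> l0 cg hp p.
set c := (2 * lam)^-1.
have c0 : 0 < c by rewrite invr_gt0 mulr_gt0.
have key : forall t, 0 < t -> t <= 1 ->
   inner (a - yv) (p - yv) <= lam * (g p - g yv) + t * (`|p - yv| ^+ 2 / 2).
  move=> t t0 t1.
  have h1 := hp (t *: p + (1 - t) *: yv).
  have h2 := cg p yv t (ltW t0) t1.
  have e : a - (t *: p + (1 - t) *: yv) = (a - yv) - t *: (p - yv).
    by rewrite convcomb opprD addrA.
  rewrite e [X in _ <= _ + _ * X](nsqB Hip) nsqZ (ipZr Hip) in h1.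
  set N := `|p - yv| ^+ 2 in h1 *; set I := inner (a - yv) (p - yv) in h1 *.
  set A := `|a - yv| ^+ 2 in h1.
  rewrite -/c in h1.
  have h3 : t * g yv <= t * g p - c * (2 * t * I) + c * t ^+ 2 * N by nra.
  have h4 : g yv <= g p - c * 2 * I + c * t * N.
    rewrite -(ler_pM2l t0); nra.
  have hc : c * (2 * lam) = 1 by rewrite mulVf // mulf_neq0 // gt_eqF.
  have : 2 * lam * g yv <= 2 * lam * (g p - c * 2 * I + c * t * N).
    by rewrite ler_pM2l ?mulr_gt0.
  have e2 : 2 * lam * (g p - c * 2 * I + c * t * N) = 2 * lam * g p - 2 * I + t * N.
    by rewrite /c; field; rewrite gt_eqF.
  rewrite e2; lra.
exact: le_small_t key.
Qed.

Lemma grad_ineq (h : H -> R) (g : H -> H) :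
  convex_fun h -> frechet_gradient inner h g ->
  forall a b, inner (g a) (b - a) <= h b - h a.
Proof.
move=> ch fg a b.
have [e0|nz] := eqVneq (b - a) 0.
  by move/eqP: e0; rewrite subr_eq0 => /eqP ->; rewrite subrr (ip0r Hip) subrr.
set v := b - a.
have nv : 0 < `|v| by rewrite normr_gt0.
apply/ler_addgt0Pr => e ep.
have [del d0 hd] := fg a (e / `|v|) (divr_gt0 ep nv).
pose t := Num.min 1 (del / (2 * `|v|)).
have t0 : 0 < t by rewrite lt_min ltr01 divr_gt0 // mulr_gt0.
have t1 : t <= 1 by rewrite ge_min lexx.
have t2 : t <= del / (2 * `|v|) by rewrite ge_min lexx orbT.
have tv : `|t *: v| < del.
  rewrite normrZ gtr0_norm //.
  have : t * `|v| <= del / 2.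
    rewrite -(ler_pM2r nv) in t2; move: t2.
    by rewrite invfM mulrA -!mulrA mulVf ?gt_eqF // mulr1 mulrC.
  lra.
have h1 := hd _ tv.
have h2 := ch b a t (ltW t0) t1.
rewrite convcomb -/v in h2.
rewrite normrZ gtr0_norm // (ipZr Hip) in h1.
have h3 : e / `|v| * (t * `|v|) = t * e.
  by field; rewrite gt_eqF.
rewrite h3 in h1.
move: h1; rewrite ler_norml => /andP [h1 _].
have : t * inner (g a) v <= t * (h b - h a + e) by nra.
by rewrite ler_pM2l.
Qed.

Lemma cocoercive (h : H -> R) (g : H -> H) (K : R) :
  0 < K -> convex_fun h -> frechet_gradient inner h g -> lipschitz_with K g ->
  forall a b, `|g a - g b| ^+ 2 <= 2 * K * inner (g a - g b) (a - b).
Proof.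
move=> K0 ch fg lg.
have gi := grad_ineq ch fg.
have desc : forall p q, h q - h p <= inner (g p) (q - p) + K * `|q - p| ^+ 2.
  move=> p q.
  have h1 := gi q p.
  have h2 : inner (g q) (q - p) = inner (g p) (q - p) + inner (g q - g p) (q - p).
    by rewrite (ipBl Hip) addrCA subrr addr0.
  have h3 := CS Hip (g q - g p) (q - p).
  have h4 := lg q p.
  have h5 : inner (g q) (p - q) = - inner (g q) (q - p).
    by rewrite -(ipNr Hip) opprB.
  have : `|g q - g p| * `|q - p| <= K * `|q - p| * `|q - p|.
    by rewrite ler_wpM2r.
  rewrite -mulrA -expr2; nra.
have half : forall p q, inner (g p) (q - p) + `|g q - g p| ^+ 2 / (4 * K) <= h q - h p.
  move=> p q.
  set s := (2 * K)^-1.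
  have s0 : 0 < s by rewrite invr_gt0 mulr_gt0.
  set w := q - s *: (g q - g p).
  have h1 := gi p w.
  have h2 := desc q w.
  have e1 : w - p = (q - p) - s *: (g q - g p) by rewrite /w addrAC.
  have e2 : w - q = - (s *: (g q - g p)) by rewrite /w addrAC subrr add0r.
  rewrite e1 (ipBr Hip) (ipZr Hip) in h1.
  rewrite e2 normrN nsqZ (ipNr Hip) (ipZr Hip) in h2.
  have e3 : inner (g q) (g q - g p) = inner (g p) (g q - g p) + `|g q - g p| ^+ 2.
    by rewrite (ip_nsq Hip) -(ipDl Hip) addrCA subrr addr0.
  rewrite e3 in h2.
  have K0' : K != 0 by rewrite gt_eqF.
  have e5 : (4 * K)^-1 = s / 2 by rewrite /s; field.
  rewrite e5.
  set N := `|g q - g p| ^+ 2 in h2 *.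
  have e6 : K * (s ^+ 2 * N) = s / 2 * N by rewrite /s; field.
  rewrite e6 in h2.
  lra.
move=> a b.
have h1 := half a b; have h2 := half b a.
have e1 : `|g a - g b| = `|g b - g a| by rewrite -normrN opprB.
have e2 : inner (g a - g b) (a - b) = inner (g b) (b - a) - inner (g a) (b - a) .
  rewrite (ipBl Hip) -[a - b]opprB !(ipNr Hip); lra.
rewrite e2; rewrite -e1 in h1.
have e3 : inner (g b) (a - b) = - inner (g b) (b - a) by rewrite -(ipNr Hip) opprB.
rewrite e3 in h2.
set N := `|g a - g b| ^+ 2 in h1 h2 *.
have N0 : 0 <= N by rewrite sqr_ge0.
have : N / (4 * K) + N / (4 * K) <= inner (g b) (b - a) - inner (g a) (b - a) by lra.
have -> : N / (4 * K) + N / (4 * K) = N / (2 * K * 1).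
  by field; rewrite gt_eqF.
rewrite mulr1 ler_pdivrMr ?mulr_gt0 //; lra.
Qed.

Lemma grad_step_nonexp (h : H -> R) (g : H -> H) (K lam : R) :
  0 < K -> convex_fun h -> frechet_gradient inner h g -> lipschitz_with K g ->
  0 <= lam -> lam * K <= 1 ->
  forall a b, `|(a - lam *: g a) - (b - lam *: g b)| <= `|a - b|.
Proof.
move=> K0 ch fg lg l0 lK a b.
have cc := cocoercive K0 ch fg lg a b.
have e : (a - lam *: g a) - (b - lam *: g b) = (a - b) - lam *: (g a - g b).
  by rewrite scalerBr !opprD !opprK; exact: addrACA.
rewrite e; apply: le_of_sq => //.
rewrite (nsqB Hip) nsqZ (ipZr Hip) (ipC Hip (a - b)).
set N := `|g a - g b| ^+ 2 in cc *.
set I := inner (g a - g b) (a - b) in cc *.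
have N0 : 0 <= N by rewrite sqr_ge0.
have : lam ^+ 2 * N <= lam ^+ 2 * (2 * K * I) by rewrite ler_wpM2l ?sqr_ge0.
have I0 : 0 <= I.
  have : 0 <= 2 * K * I by apply: le_trans cc.
  by rewrite pmulr_rge0 // mulr_gt0.
have h1 : lam * I * (lam * K) <= lam * I * 1 := ler_wpM2l (mulr_ge0 l0 I0) lK.
move=> h2; nra.
Qed.

End Ops.


Section Seq.
Variable R : realType.

Lemma ev_of_cvg0 (u : nat -> R) : u @ \oo --> 0 ->
  forall e, 0 < e -> exists N, forall n, (N <= n)%N -> `|u n| <= e.
Proof.
move/cvgrPdist_le => h e e0.
have [N _ hN] := h e e0.
exists N => n hn; have := hN n hn.
by rewrite sub0r normrN.
Qed.

Lemma cvg0_of_ev (u : nat -> R) :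
  (forall e, 0 < e -> exists N, forall n, (N <= n)%N -> `|u n| <= e) ->
  u @ \oo --> 0.
Proof.
move=> h; apply/cvgrPdist_le => e e0.
have [N hN] := h e e0.
exists N => // n hn /=; rewrite sub0r normrN; exact: hN.
Qed.

Lemma diverge (al : nat -> R) :
  (forall n, (1 <= n)%N -> 0 <= al n) ->
  (\sum_(1 <= k <oo) (al k)%:E = +oo)%E ->
  forall N B, (1 <= N)%N -> exists n, (N <= n)%N /\ B < \sum_(N <= k < n.+1) al k.
Proof.
move=> a0 hd N B N1.
apply: contrapT => hn.
have hb : forall n, (N <= n)%N -> \sum_(N <= k < n.+1) al k <= B.
  move=> n hn'; rewrite leNgt; apply/negP => hlt; apply: hn; by exists n.
set C := \sum_(1 <= k < N) al k + B.
have : (lim ((fun n => \sum_(1 <= k < n) (al k)%:E) @ \oo) <= C%:E)%E.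
  apply: lime_le.
    apply: is_cvg_nneseries => n n1 _; rewrite lee_fin; exact: a0.
  exists N.+1 => // n /= hn'.
  rewrite sumEFin lee_fin /C.
  rewrite (big_cat_nat (n := N)) //=; last by apply: ltnW.
  rewrite lerD2l; case: n hn' => // n hn'; apply: hb; by [].
by rewrite hd leye_eq.
Qed.

Lemma xu (a al : nat -> R) (N0 : nat) :
  (forall n, (N0 <= n)%N -> 0 <= a n) ->
  (forall n, (N0 <= n)%N -> 0 < al n <= 1) ->
  (forall N B, (N0 <= N)%N -> exists n, (N <= n)%N /\ B < \sum_(N <= k < n.+1) al k) ->
  (forall e, 0 < e -> exists N, forall n, (N <= n)%N ->
       a n.+1 <= (1 - al n.+1) * a n + e * al n.+1) ->
  a @ \oo --> 0.
Proof.
move=> a0 al01 hdiv hrec; apply: cvg0_of_ev => e e0.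
have e2 : 0 < e / 2 by rewrite divr_gt0.
have [N1' hN1'] := hrec _ e2.
set N1 := maxn N1' N0.
have hN1 : forall n, (N1 <= n)%N -> a n.+1 <= (1 - al n.+1) * a n + e / 2 * al n.+1.
  by move=> n hn; apply: hN1'; apply: leq_trans hn; apply: leq_maxl.
have alp : forall n, (N1 <= n)%N -> 0 < al n <= 1.
  by move=> n hn; apply: al01; apply: leq_trans hn; apply: leq_maxr.
pose b n := Num.max (a n - e / 2) 0.
have b0 : forall n, 0 <= b n by move=> n; rewrite le_max lexx orbT.
have brec : forall n, (N1 <= n)%N -> b n.+1 <= (1 - al n.+1) * b n.
  move=> n hn.
  have /andP[p1 p2] := alp n.+1 (leqW hn).
  have h := hN1 n hn.
  rewrite /b ge_max; apply/andP; split.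
    apply: le_trans (_ : (1 - al n.+1) * (a n - e / 2) <= _).
      nra.
    by apply: ler_wpM2l; [lra | rewrite le_max lexx].
  by apply: mulr_ge0; [lra | rewrite le_max lexx orbT].
pose S n := \sum_(N1.+1 <= k < n.+1) al k.
have S0 : forall n, 0 <= S n.
  move=> n; rewrite /S big_nat_cond; apply: sumr_ge0 => k /andP [/andP [hk _] _].
  by have /andP[+ _] := alp k (ltnW hk); apply: ltW.
have Srec : forall n, (N1 <= n)%N -> S n.+1 = S n + al n.+1.
  by move=> n hn; rewrite /S big_nat_recr.
have key : forall k, b (N1 + k)%N * (1 + S (N1 + k)%N) <= b N1.
  elim=> [|k IH].
    rewrite addn0 /S big_geq // addr0 mulr1 //.
  rewrite addnS Srec ?leq_addr //.
  set n := (N1 + k)%N in IH *.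
  have /andP[p1 p2] := alp n.+1 (leqW (leq_addr _ _)).
  have h := brec n (leq_addr _ _).
  have hS := S0 n; have hb := b0 n; have hb' := b0 n.+1.
  apply: le_trans IH.
  have : b n.+1 * (1 + (S n + al n.+1)) <= (1 - al n.+1) * b n * (1 + (S n + al n.+1)).
    by apply: ler_wpM2r => //; lra.
  have : 0 <= b n * (al n.+1 * S n + al n.+1 ^+ 2).
    by apply: mulr_ge0 => //; apply: addr_ge0; [apply: mulr_ge0; lra | apply: sqr_ge0].
  nra.
have [n0 [hn0 hS]] := hdiv N1.+1 (b N1 / (e / 2)) (leq_trans (leq_maxr _ _) (leqnSn _)).
exists n0 => m hm.
rewrite ger0_norm; last first.
  apply: a0; apply: (leq_trans (leq_maxr N1' N0)); apply: (leq_trans (ltnW hn0)); exact: hm.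
have hm' : (N1 <= m)%N by apply: leq_trans hm; apply: leq_trans hn0.
have := key (m - N1)%N; rewrite subnKC //.
have Smon : S n0 <= S m.
  rewrite /S [X in _ <= X](big_cat_nat (n := n0.+1)) //=; last first.
    by apply: ltnW.
  rewrite lerDl big_nat_cond; apply: sumr_ge0 => k /andP [/andP [hk _] _].
  have /andP[+ _] := alp k (leq_trans (ltnW hn0) (ltnW hk)).
  by apply: ltW.
have hbm : b m * (1 + S m) <= b N1 -> b m <= e / 2.
  move=> hk; rewrite leNgt; apply/negP => hlt.
  have : b N1 / (e / 2) < S m by apply: lt_le_trans Smon.
  rewrite ltr_pdivrMr // => h1.
  have h2 : S m * (e / 2) <= S m * b m by apply: ler_wpM2l; [apply: S0 | apply: ltW].
  have h3 := b0 m.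
  have h4 : b m * (1 + S m) = b m + S m * b m by rewrite mulrDr mulr1 mulrC.
  rewrite h4 in hk; lra.
move/hbm => hbm'.
have : a m - e / 2 <= b m by rewrite le_max lexx.
lra.
Qed.

End Seq.


Section Stage.
Variables (R : realType) (H : normedModType R) (inner : H -> H -> R).
Hypothesis Hip : is_inner_product inner.

Lemma sub_addl (p q1 q0 : H) : (p + q1) - (p + q0) = q1 - q0.
Proof. by rewrite opprD addrACA subrr add0r. Qed.

Lemma sub_addr (c v : H) : (c + v) - c = v.
Proof. by rewrite addrC addKr. Qed.

Lemma sub_subl (z p q : H) : (z - p) - (z - q) = q - p.
Proof. by rewrite sub_addl opprK addrC. Qed.

Lemma prox_diff (f : H -> R) (l1 l0 : R) (a1 a0 y1 y0 : H) :
  0 < l1 -> 0 < l0 -> convex_fun f -> is_prox l1 f a1 y1 -> is_prox l0 f a0 y0 ->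
  `|y1 - y0| <= `|a1 - a0| + `|l0 - l1| / l0 * `|a0 - y0|.
Proof.
move=> p1 p0 cf h1 h0.
have v1 := prox_var Hip p1 cf h1 y0.
have v0 := prox_var Hip p0 cf h0 y1.
set e := y1 - y0.
have e1 : y0 - y1 = - e by rewrite /e opprB.
rewrite e1 (ipNr Hip) in v1.
have v0' : l1 / l0 * inner (a0 - y0) e <= l1 * (f y1 - f y0).
  have : l1 / l0 * inner (a0 - y0) e <= l1 / l0 * (l0 * (f y1 - f y0)).
    by apply: ler_wpM2l => //; apply: divr_ge0; apply: ltW.
  by rewrite mulrA divfK ?gt_eqF.
set r := l1 / l0 in v0'.
have key : `|e| ^+ 2 <= inner (a1 - a0) e + (1 - r) * inner (a0 - y0) e.
  have ee : inner e e = inner y1 e - inner y0 e by rewrite {1}/e (ipBl Hip).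
  have i1 : inner (a1 - y1) e = inner (a1 - a0) e + inner (a0 - y0) e - inner e e.
    rewrite ee !(ipBl Hip); lra.
  rewrite i1 in v1; rewrite (ip_nsq Hip).
  lra.
have c1 := CS Hip (a1 - a0) e.
have c2 := CSabs Hip (a0 - y0) e.
have c3 : (1 - r) * inner (a0 - y0) e <= `|1 - r| * (`|a0 - y0| * `|e|).
  apply: le_trans (ler_norm _) _; rewrite normrM; apply: ler_wpM2l => //.
have hr : `|1 - r| = `|l0 - l1| / l0.
  rewrite /r -{1}(divff (lt0r_neq0 p0)) -mulrBl normrM.
  by rewrite (gtr0_norm (x := l0^-1)) ?invr_gt0.
rewrite -hr.
have [e0|en] := eqVneq e 0.
  rewrite e0 normr0; apply: addr_ge0 => //; apply: mulr_ge0 => //.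
have ep : 0 < `|e| by rewrite normr_gt0.
have : `|e| * `|e| <= (`|a1 - a0| + `|1 - r| * `|a0 - y0|) * `|e|.
  rewrite -expr2; nra.
by rewrite ler_pM2r.
Qed.

Lemma one_stage (f h : H -> R) (g T : H -> H) (K : R)
  (wn1 wn wnm1 zn1 zn dn2 dn1 dn yn1 yn w1 w0 u : H)
  (th1 th0 l1 l0 b1 b0 a1 a0 Bw Bg Bd Bay Bu : R) :
  convex_fun f -> convex_fun h -> frechet_gradient inner h g -> 0 < K ->
  lipschitz_with K g -> firmly_nonexpansive inner T ->
  zn1 = wn1 + th1 *: (wn1 - wn) -> zn = wn + th0 *: (wn - wnm1) ->
  dn2 = - g zn1 + b1 *: dn1 -> dn1 = - g zn + b0 *: dn ->
  is_prox l1 f (zn1 + l1 *: dn2) yn1 -> is_prox l0 f (zn + l0 *: dn1) yn ->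
  w1 = a1 *: u + (1 - a1) *: T yn1 -> w0 = a0 *: u + (1 - a0) *: T yn ->
  `|wn1| <= Bw -> `|wn| <= Bw -> `|wnm1| <= Bw -> `|g zn| <= Bg ->
  `|dn1| <= Bd -> `|dn| <= Bd -> `|zn + l0 *: dn1 - yn| <= Bay ->
  `|u - T yn| <= Bu ->
  0 <= th1 -> 0 <= th0 -> 0 <= b1 -> 0 <= b0 -> 0 < l1 -> 0 < l0 -> l1 * K <= 1 ->
  0 <= a1 <= 1 ->
  `|w1 - w0| <= (1 - a1) * `|wn1 - wn| +
     (Bu * `|a1 - a0| + 2 * Bw * (th1 + th0) + Bg * `|l0 - l1|
      + Bd * (l1 * b1 + l0 * b0) + Bay * (`|l0 - l1| / l0)).
Proof.
move=> cf ch fg K0 lg fT hz1 hz0 hd2 hd1 hp1 hp0 hw1 hw0 bwn1 bwn bwnm1 bg bd1 bd0 bay bu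
  t1 t0 pb1 pb0 pl1 pl0 lK /andP [pa1 pa1'].
have Bw0 : 0 <= Bw by apply: le_trans bwn.
have Bg0 : 0 <= Bg by apply: le_trans bg.
have Bd0 : 0 <= Bd by apply: le_trans bd0.
have Bay0 : 0 <= Bay by apply: le_trans bay.
have Bu0 : 0 <= Bu by apply: le_trans bu.
have s1 : `|zn1 - zn| <= `|wn1 - wn| + 2 * Bw * th1 + 2 * Bw * th0.
  have e : zn1 - zn = (wn1 - wn) + (th1 *: (wn1 - wn) - th0 *: (wn - wnm1)).
    by rewrite hz1 hz0 opprD addrACA.
  rewrite e; apply: le_trans (ler_normD _ _) _.
  rewrite -addrA lerD2l; apply: le_trans (ler_normB _ _) _.
  rewrite !normrZ !ger0_norm //.
  have q1 : `|wn1 - wn| <= 2 * Bw by apply: le_trans (ler_normB _ _) _; lra.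
  have q2 : `|wn - wnm1| <= 2 * Bw by apply: le_trans (ler_normB _ _) _; lra.
  apply: lerD.
    by rewrite [X in _ <= X]mulrC; apply: ler_wpM2l.
  by rewrite [X in _ <= X]mulrC; apply: ler_wpM2l.
set A1 := zn1 + l1 *: dn2.
set A0 := zn + l0 *: dn1.
have eA1 : A1 = (zn1 - l1 *: g zn1) + (l1 * b1) *: dn1.
  by rewrite /A1 hd2 scalerDr scalerN scalerA addrA.
have eA0 : A0 = (zn - l0 *: g zn) + (l0 * b0) *: dn.
  by rewrite /A0 hd1 scalerDr scalerN scalerA addrA.
have s2 : `|A1 - A0| <= `|zn1 - zn| + l1 * b1 * Bd + `|l0 - l1| * Bg + l0 * b0 * Bd.
  set c1 := zn1 - l1 *: g zn1.
  set c2 := zn - l1 *: g zn.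
  set c3 := zn - l0 *: g zn.
  have d1 : `|A1 - c1| <= l1 * b1 * Bd.
    have q : 0 <= l1 * b1 by apply: mulr_ge0 => //; apply: ltW.
    by rewrite eA1 sub_addr normrZ ger0_norm //; apply: ler_wpM2l.
  have d2 : `|c1 - c2| <= `|zn1 - zn|.
    exact: (grad_step_nonexp Hip K0 ch fg lg (ltW pl1) lK).
  have d3 : `|c2 - c3| <= `|l0 - l1| * Bg.
    rewrite /c2 /c3 sub_subl -scalerBl normrZ.
    by apply: ler_wpM2l.
  have d4 : `|c3 - A0| <= l0 * b0 * Bd.
    have q : 0 <= l0 * b0 by apply: mulr_ge0 => //; apply: ltW.
    by rewrite eA0 -normrN opprB sub_addr normrZ ger0_norm //; apply: ler_wpM2l.
  have t12 := ler_distD c1 A1 c2.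
  have t23 := ler_distD c2 A1 c3.
  have t34 := ler_distD c3 A1 A0.
  lra.
have s3 : `|yn1 - yn| <= `|A1 - A0| + `|l0 - l1| / l0 * Bay.
  apply: le_trans (prox_diff pl1 pl0 cf hp1 hp0) _.
  rewrite lerD2l; apply: ler_wpM2l => //.
  by apply: divr_ge0 => //; apply: ltW.
have s4 : `|w1 - w0| <= `|a1 - a0| * Bu + (1 - a1) * `|yn1 - yn|.
  set c := a1 *: u + (1 - a1) *: T yn.
  have d1 : `|w1 - c| <= (1 - a1) * `|yn1 - yn|.
    rewrite hw1 /c sub_addl -scalerBr normrZ ger0_norm ?subr_ge0 //.
    apply: ler_wpM2l; first by rewrite subr_ge0.
    exact: (firm_nonexp Hip fT yn1 yn).
  have d2 : `|c - w0| <= `|a1 - a0| * Bu.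
    rewrite hw0 /c !convcomb sub_addl -scalerBl normrZ.
    by apply: ler_wpM2l.
  have := ler_distD c w1 w0; lra.
have q : `|l0 - l1| / l0 * Bay = Bay * (`|l0 - l1| / l0) by rewrite mulrC.
have na : 0 <= `|yn1 - yn| by [].
have hh : (1 - a1) * `|yn1 - yn| <= (1 - a1) * (`|wn1 - wn| + 2 * Bw * th1 + 2 * Bw * th0
     + l1 * b1 * Bd + `|l0 - l1| * Bg + l0 * b0 * Bd + `|l0 - l1| / l0 * Bay).
  apply: ler_wpM2l; first by rewrite subr_ge0.
  lra.
have rest0 : 0 <= 2 * Bw * th1 + 2 * Bw * th0 + l1 * b1 * Bd + `|l0 - l1| * Bg
     + l0 * b0 * Bd + `|l0 - l1| / l0 * Bay.
  have : 0 <= `|l0 - l1| / l0 * Bay by apply: mulr_ge0 => //; apply: divr_ge0 => //; apply: ltW.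
  have : 0 <= l1 * b1 * Bd by apply: mulr_ge0 => //; apply: mulr_ge0 => //; apply: ltW.
  have : 0 <= l0 * b0 * Bd by apply: mulr_ge0 => //; apply: mulr_ge0 => //; apply: ltW.
  have : 0 <= `|l0 - l1| * Bg by apply: mulr_ge0.
  have : 0 <= 2 * Bw * th1 by apply: mulr_ge0 => //; apply: mulr_ge0.
  have : 0 <= 2 * Bw * th0 by apply: mulr_ge0 => //; apply: mulr_ge0.
  lra.
set rest := 2 * Bw * th1 + 2 * Bw * th0 + l1 * b1 * Bd + `|l0 - l1| * Bg
     + l0 * b0 * Bd + `|l0 - l1| / l0 * Bay in rest0.
have hh2 : (1 - a1) * (`|wn1 - wn| + 2 * Bw * th1 + 2 * Bw * th0
     + l1 * b1 * Bd + `|l0 - l1| * Bg + l0 * b0 * Bd + `|l0 - l1| / l0 * Bay)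
     = (1 - a1) * `|wn1 - wn| + (1 - a1) * rest by rewrite /rest; ring.
have hh3 : (1 - a1) * rest <= rest.
  have : a1 * rest >= 0 by apply: mulr_ge0.
  rewrite mulrBl mul1r; lra.
rewrite hh2 in hh.
have : Bu * `|a1 - a0| + 2 * Bw * (th1 + th0) + Bg * `|l0 - l1| + Bd * (l1 * b1 + l0 * b0)
  + Bay * (`|l0 - l1| / l0) = `|a1 - a0| * Bu + rest by rewrite /rest; ring.
move=> ->.
lra.
Qed.

Lemma nsq_conv (a : R) (A B : H) : 0 <= a <= 1 ->
  `|a *: A + (1 - a) *: B| ^+ 2 <= a * `|A| ^+ 2 + (1 - a) * `|B| ^+ 2.
Proof.
move=> /andP [a0 a1].
rewrite (nsqD Hip) !nsqZ (ipZl Hip) (ipZr Hip).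
have := nsqB Hip A B.
have : 0 <= a * (1 - a) * `|A - B| ^+ 2.
  by apply: mulr_ge0; [apply: mulr_ge0; lra | apply: sqr_ge0].
set N := `|A - B| ^+ 2; set I := inner A B.
move=> h1 h2; rewrite h2 in h1.
nra.
Qed.

Lemma stage_b (f : H -> R) (T : H -> H) (wn wp zn dn1 yn w1 u xb : H) (th lam al Bw : R) :
  convex_fun f -> firmly_nonexpansive inner T -> T xb = xb ->
  zn = wn + th *: (wn - wp) -> is_prox lam f (zn + lam *: dn1) yn ->
  w1 = al *: u + (1 - al) *: T yn ->
  `|wn| <= Bw -> `|wp| <= Bw -> 0 <= th <= 1 -> 0 < lam -> 0 <= al <= 1 ->
  `|w1 - xb| ^+ 2 <= `|wn - xb| ^+ 2 + th * (2 * (Bw + `|xb|) * (2 * Bw) + (2 * Bw) ^+ 2)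
    + al * `|u - xb| ^+ 2 - (1 - al) * `|T yn - yn| ^+ 2 - `|zn - yn| ^+ 2
    + 2 * lam * (f xb - f yn) + 2 * lam * inner dn1 (yn - xb).
Proof.
move=> cf fT Tx hz hp hw bwn bwp /andP [th0 th1] l0 hal.
have Bw0 : 0 <= Bw by apply: le_trans bwn.
have nz : `|zn - xb| ^+ 2 <= `|wn - xb| ^+ 2 + th * (2 * (Bw + `|xb|) * (2 * Bw) + (2 * Bw) ^+ 2).
  have e : zn - xb = (wn - xb) + th *: (wn - wp) by rewrite hz addrAC.
  rewrite e (nsqD Hip) nsqZ (ipZr Hip).
  have c := CS Hip (wn - xb) (wn - wp).
  have q1 : `|wn - xb| <= Bw + `|xb| by apply: le_trans (ler_normB _ _) _; lra.
  have q2 : `|wn - wp| <= 2 * Bw by apply: le_trans (ler_normB _ _) _; lra.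
  have q3 : `|wn - xb| * `|wn - wp| <= (Bw + `|xb|) * (2 * Bw).
    by apply: ler_pM.
  have q4 : `|wn - wp| ^+ 2 <= (2 * Bw) ^+ 2.
    by rewrite ler_sqr ?nnegrE //; apply: mulr_ge0.
  have q5 : th ^+ 2 <= th by rewrite expr2; apply: ler_piMr.
  have q6 : th ^+ 2 * `|wn - wp| ^+ 2 <= th * (2 * Bw) ^+ 2.
    by apply: ler_pM; rewrite ?sqr_ge0 ?exprn_ge0.
  have q7 : th * inner (wn - xb) (wn - wp) <= th * ((Bw + `|xb|) * (2 * Bw)).
    apply: ler_wpM2l => //; lra.
  lra.
have pv := prox_var Hip l0 cf hp xb.
have e1 : inner (zn + lam *: dn1 - yn) (xb - yn)
    = inner (zn - yn) (xb - yn) - lam * inner dn1 (yn - xb).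
  have q : inner dn1 (xb - yn) = - inner dn1 (yn - xb) by rewrite -(ipNr Hip) opprB.
  rewrite addrAC [LHS](ipDl Hip) (ipZl Hip) q; lra.
rewrite e1 in pv.
have yid : `|yn - xb| ^+ 2 = `|zn - xb| ^+ 2 - `|zn - yn| ^+ 2 + 2 * inner (zn - yn) (xb - yn).
  have e2 : zn - xb = (zn - yn) - (xb - yn) by rewrite opprB addrA subrK.
  rewrite e2 [`|(zn - yn) - (xb - yn)| ^+ 2](nsqB Hip) -[xb - yn]opprB normrN; lra.
have tf := firm_fix Hip fT yn Tx.
have ew : w1 - xb = al *: (u - xb) + (1 - al) *: (T yn - xb).
  rewrite hw !convcomb.
  have -> : u - xb - (T yn - xb) = u - T yn by rewrite opprB addrA subrK.
  by rewrite addrAC.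
have cv := nsq_conv (u - xb) (T yn - xb) hal.
rewrite -ew in cv.
set E := - `|zn - yn| ^+ 2 + 2 * lam * (f xb - f yn) + 2 * lam * inner dn1 (yn - xb).
have hE : `|yn - xb| ^+ 2 <= `|zn - xb| ^+ 2 + E by rewrite /E; lra.
have hE2 : 0 <= `|zn - xb| ^+ 2 + E by apply: le_trans hE; apply: sqr_ge0.
move: hal => /andP [al0 al1].
have h1 : (1 - al) * `|T yn - xb| ^+ 2 <= (1 - al) * (`|zn - xb| ^+ 2 + E - `|T yn - yn| ^+ 2).
  by apply: ler_wpM2l; lra.
have h2 : 0 <= al * (`|zn - xb| ^+ 2 + E) by apply: mulr_ge0.
have : E = - `|zn - yn| ^+ 2 + 2 * lam * (f xb - f yn) + 2 * lam * inner dn1 (yn - xb) by [].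
nra.
Qed.

End Stage.


Section Recur.
Variable R : realType.

Lemma recur (Dn Dn1 ln ln1 an an1 thn thn1 bn bn1 sig M' Bu Bw Bg Bd Bay : R) :
  0 < ln1 -> 0 < ln -> 0 < an1 -> an1 <= 1 -> 0 < an ->
  0 <= thn1 -> thn1 <= thn -> 0 <= bn1 -> bn1 <= bn -> ln / ln1 <= sig ->
  0 <= Dn -> Dn <= 2 * Bw -> 0 <= M' -> 0 <= Bu -> 0 <= Bw -> 0 <= Bg -> 0 <= Bd -> 0 <= Bay ->
  Dn1 <= (1 - an1) * Dn + M' * (Bu * `|an1 - an| + 2 * Bw * (thn1 + thn) + Bg * `|ln - ln1|
      + Bd * (ln1 * bn1 + ln * bn) + Bay * (`|ln - ln1| / ln)) ->
  Dn1 / ln1 <= (1 - an1) * (Dn / ln) + an1 * (2 * Bw * (an1^-1 * `|ln1^-1 - ln^-1|)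
     + M' * (Bu * (ln1^-1 * `|1 - an / an1|) + 4 * Bw * (thn / (an1 * ln1))
       + Bg * (ln * (an1^-1 * `|ln1^-1 - ln^-1|)) + Bd * (1 + sig) * (bn / an1)
       + Bay * (an1^-1 * `|ln1^-1 - ln^-1|))).
Proof.
move=> l1 l0 a1 a1' a0 th1 th10 b1 b10 hsig D0 D2 M0 Bu0 Bw0 Bg0 Bd0 Bay0 hD.
have il1 : 0 < ln1^-1 by rewrite invr_gt0.
have il0 : 0 < ln^-1 by rewrite invr_gt0.
have an1n : an1 != 0 by rewrite gt_eqF.
have ln1n : ln1 != 0 by rewrite gt_eqF.
have lnn : ln != 0 by rewrite gt_eqF.
set t1 := an1^-1 * `|ln1^-1 - ln^-1|.
set t2 := ln1^-1 * `|1 - an / an1|.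
set t3 := thn / (an1 * ln1).
set t4 := bn / an1.
have F1 : `|ln1^-1 - ln^-1| = an1 * t1 by rewrite /t1 mulrA mulfV // mul1r.
have F2 : `|an1 - an| * ln1^-1 = an1 * t2.
  have G : an1 * `|1 - an / an1| = `|an1 - an|.
    by rewrite -{1}(gtr0_norm a1) -normrM mulrBr mulr1 mulrCA mulfV // mulr1.
  by rewrite /t2 mulrCA G mulrC.
have F3 : thn * ln1^-1 = an1 * t3 by rewrite /t3; field; by rewrite ?an1n ?ln1n ?lnn.
have F4 : bn = an1 * t4 by rewrite /t4; field; by rewrite ?an1n ?ln1n ?lnn.
have F5 : `|ln - ln1| * ln1^-1 = an1 * (ln * t1).
  rewrite mulrCA -F1.
  have -> : `|ln - ln1| * ln1^-1 = `|(ln - ln1) * ln1^-1| by rewrite normrM (gtr0_norm il1).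
  have -> : ln * `|ln1^-1 - ln^-1| = `|ln * (ln1^-1 - ln^-1)| by rewrite normrM (gtr0_norm l0).
  congr `|_|; field; by rewrite ?an1n ?ln1n ?lnn.
have F6 : `|ln - ln1| / ln * ln1^-1 = an1 * t1.
  rewrite -F1.
  have -> : `|ln - ln1| / ln * ln1^-1 = `|(ln - ln1) / ln * ln1^-1|.
    by rewrite !normrM (gtr0_norm il0) (gtr0_norm il1).
  congr `|_|; field; by rewrite ?an1n ?ln1n ?lnn.
have F7 : ln * bn * ln1^-1 <= sig * bn.
  have b0 : 0 <= bn := le_trans b1 b10.
  rewrite mulrAC; apply: ler_wpM2r => //.
have t10 : 0 <= t1 by rewrite /t1 mulr_ge0 // invr_ge0 ltW.
have th0 : 0 <= thn := le_trans th1 th10.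
have b0 : 0 <= bn := le_trans b1 b10.
have t30 : 0 <= t3 by rewrite /t3 divr_ge0 // mulr_ge0 // ltW.
have t40 : 0 <= t4 by rewrite /t4 divr_ge0 // ltW.
have A : Dn1 / ln1 <= (1 - an1) * Dn * ln1^-1 + M' * (Bu * (an1 * t2) + 2 * Bw * (thn1 * ln1^-1 + an1 * t3) + Bg * (an1 * (ln * t1))
      + Bd * (bn1 + ln * bn * ln1^-1) + Bay * (an1 * t1)).
  rewrite -F2 -F3 -F5 -F6.
  have e : bn1 = ln1 * bn1 * ln1^-1 by rewrite mulrAC mulfV // mul1r.
  rewrite [X in Bd * (X + _)]e.
  have := ler_wpM2r (ltW il1) hD.
  move=> h; apply: le_trans h _.
  rewrite le_eqVlt; apply/orP; left; apply/eqP; field; by rewrite ?an1n ?ln1n ?lnn.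
have B : (1 - an1) * Dn * ln1^-1 <= (1 - an1) * (Dn / ln) + 2 * Bw * (an1 * t1).
  rewrite -F1.
  have e : (1 - an1) * Dn * ln1^-1 = (1 - an1) * (Dn / ln) + (1 - an1) * Dn * (ln1^-1 - ln^-1).
    by field; rewrite ?an1n ?ln1n ?lnn.
  rewrite e lerD2l.
  apply: le_trans (ler_norm _) _; rewrite !normrM.
  rewrite (ger0_norm D0) (ger0_norm (x := 1 - an1)) ?subr_ge0 //.
  apply: ler_wpM2r => //.
  have : (1 - an1) * Dn <= 1 * Dn by apply: ler_wpM2r => //; lra.
  lra.
have C : thn1 * ln1^-1 <= an1 * t3 by rewrite -F3; apply: ler_wpM2r => //; apply: ltW.
have C' : bn1 + ln * bn * ln1^-1 <= (1 + sig) * (an1 * t4).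
  rewrite -F4; lra.
have : M' * (Bu * (an1 * t2) + 2 * Bw * (thn1 * ln1^-1 + an1 * t3) + Bg * (an1 * (ln * t1))
      + Bd * (bn1 + ln * bn * ln1^-1) + Bay * (an1 * t1)) <=
   M' * (Bu * (an1 * t2) + 2 * Bw * (an1 * t3 + an1 * t3) + Bg * (an1 * (ln * t1))
      + Bd * ((1 + sig) * (an1 * t4)) + Bay * (an1 * t1)).
  apply: ler_wpM2l => //.
  have : 2 * Bw * (thn1 * ln1^-1 + an1 * t3) <= 2 * Bw * (an1 * t3 + an1 * t3).
    by apply: ler_wpM2l; [apply: mulr_ge0 | lra].
  have : Bd * (bn1 + ln * bn * ln1^-1) <= Bd * ((1 + sig) * (an1 * t4)).
    by apply: ler_wpM2l.
  lra.
move=> h.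
have e : (1 - an1) * (Dn / ln) + 2 * Bw * (an1 * t1) +
   M' * (Bu * (an1 * t2) + 2 * Bw * (an1 * t3 + an1 * t3) + Bg * (an1 * (ln * t1))
      + Bd * ((1 + sig) * (an1 * t4)) + Bay * (an1 * t1))
  = (1 - an1) * (Dn / ln) + an1 * (2 * Bw * t1 + M' * (Bu * t2 + 4 * Bw * t3
       + Bg * (ln * t1) + Bd * (1 + sig) * t4 + Bay * t1)) by ring.
rewrite -e; lra.
Qed.

Lemma unif_R (M : nat) (P : nat -> R -> Prop) :
  (forall i B B', B <= B' -> P i B -> P i B') ->
  (forall i, (1 <= i <= M)%N -> exists B, P i B) ->
  exists B, forall i, (1 <= i <= M)%N -> P i B.
Proof.
move=> mono; elim: M => [|M IH] h.
  by exists 0 => i /andP [h1 h2]; move: (leq_trans h1 h2).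
have [B1 hB1] : exists B, forall i, (1 <= i <= M)%N -> P i B.
  apply: IH => i /andP [h1 h2]; apply: h; rewrite h1 /=; exact: leqW.
have [B2 hB2] : exists B, P M.+1 B by by apply: h; rewrite leqnn andbT.
exists (Num.max B1 B2) => i /andP [h1 h2].
have [e|ne] := eqVneq i M.+1.
  by rewrite e; apply: mono hB2; rewrite le_max lexx orbT.
apply: mono (hB1 i _); first by rewrite le_max lexx.
by rewrite h1 /= -ltnS ltn_neqAle ne h2.
Qed.

Lemma unif_N (M : nat) (P : nat -> nat -> Prop) :
  (forall i N N', (N <= N')%N -> P i N -> P i N') ->
  (forall i, (1 <= i <= M)%N -> exists N, P i N) ->
  exists N, forall i, (1 <= i <= M)%N -> P i N.
Proof.
move=> mono; elim: M => [|M IH] h.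
  by exists 0%N => i /andP [h1 h2]; move: (leq_trans h1 h2).
have [B1 hB1] : exists B, forall i, (1 <= i <= M)%N -> P i B.
  apply: IH => i /andP [h1 h2]; apply: h; rewrite h1 /=; exact: leqW.
have [B2 hB2] : exists B, P M.+1 B by by apply: h; rewrite leqnn andbT.
exists (maxn B1 B2) => i /andP [h1 h2].
have [e|ne] := eqVneq i M.+1.
  by rewrite e; apply: mono hB2; rewrite leq_maxr.
apply: mono (hB1 i _); first by rewrite leq_maxl.
by rewrite h1 /= -ltnS ltn_neqAle ne h2.
Qed.

End Recur.

Unset Implicit Arguments. Set Strict Implicit.

Lemma norm_cc (R : realType) (H : normedModType R) (a : R) (p q : H) :
  0 <= a <= 1 -> `|a *: p + (1 - a) *: q| <= `|p| + `|q|.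
Proof.
move=> /andP [a0 a1].
apply: le_trans (ler_normD _ _) _; rewrite !normrZ !ger0_norm ?subr_ge0 //.
apply: lerD.
  by rewrite -[X in _ <= X]mul1r; apply: ler_wpM2r.
by rewrite -[X in _ <= X]mul1r; apply: ler_wpM2r => //; lra.
Qed.

Theorem lemma3 (R : realType) (H : completeNormedModType R)
  (inner : H -> H -> R) (M : nat)
  (f h : nat -> H -> R) (gradh : nat -> H -> H) (L : nat -> R) (T : nat -> H -> H)
  (theta lambda beta alpha : nat -> R)
  (x : nat -> H) (w z d y : nat -> nat -> H) (u : nat -> H) :
  is_inner_product inner ->
  (0 < M)%N ->
  (* (A1) *)
  (forall i, (1 <= i <= M)%N -> continuous (f i) /\ convex_fun (f i)) ->
  (* (A2) *)
  (forall i, (1 <= i <= M)%N ->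
     [/\ convex_fun (h i), frechet_gradient inner (h i) (gradh i),
         0 < L i & lipschitz_with (L i)^-1 (gradh i)]) ->
  (* (A3) *)
  (forall i, (1 <= i <= M)%N -> firmly_nonexpansive inner (T i)) ->
  (* (A4) *)
  let S := [set p : H | forall i, (1 <= i <= M)%N -> Fix (T i) p] in
  let psi := fun p : H => \sum_(1 <= i < M.+1) (f i p + h i p) in
  S !=set0 ->
  (exists2 xh : H, S xh & forall p, S p -> psi xh <= psi p) ->
  (* Condition (C): decreasing sequences (indexed from n = 1) converging to 0 *)
  (forall n, (1 <= n)%N ->
     [/\ theta n.+1 <= theta n, lambda n.+1 <= lambda n,
         beta n.+1 <= beta n & alpha n.+1 <= alpha n]) ->
  theta @ \oo --> 0 -> lambda @ \oo --> 0 ->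
  beta @ \oo --> 0 -> alpha @ \oo --> 0 ->
  (forall n, (1 <= n)%N ->
     [/\ 0 <= theta n < 1,
         0 < lambda n /\ (forall i, (1 <= i <= M)%N -> lambda n <= 2 * L i),
         0 < beta n <= 1 & 0 < alpha n <= 1]) ->
  (* (C1) *)
  (\sum_(1 <= k <oo) (alpha k)%:E = +oo)%E ->
  (* (C2) *)
  (fun n => (alpha n.+1)^-1 * `|(lambda n.+1)^-1 - (lambda n)^-1|) @ \oo --> 0 ->
  (* (C3) *)
  (fun n => (lambda n.+1)^-1 * `|1 - alpha n / alpha n.+1|) @ \oo --> 0 ->
  (* (C4) *)
  (fun n => alpha n / lambda n) @ \oo --> 0 ->
  (* (C5) *)
  (fun n => theta n / (alpha n.+1 * lambda n.+1)) @ \oo --> 0 ->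
  (* (C6) *)
  (exists2 sigma : R, 1 <= sigma &
     forall n, (1 <= n)%N -> lambda n / lambda n.+1 <= sigma) ->
  (* (C7) *)
  (fun n => beta n / alpha n.+1) @ \oo --> 0 ->
  (* the algorithm; w i 0, z i 0, u i are the initial data *)
  (forall i, (1 <= i <= M)%N -> d i 1%N = - gradh i (z i 0%N)) ->
  (forall n, (1 <= n)%N -> w 1%N n = x n) ->
  (forall n i, (1 <= n)%N -> (1 <= i <= M)%N ->
     [/\ z i n = w i n + theta n *: (w i n - w i n.-1),
         d i n.+1 = - gradh i (z i n) + beta n *: d i n,
         is_prox (lambda n) (f i) (z i n + lambda n *: d i n.+1) (y i n)
       & w i.+1 n = alpha n *: u i + (1 - alpha n) *: T i (y i n)]) ->
  (forall n, (1 <= n)%N -> x n.+1 = w M.+1 n) ->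
  (* boundedness of the sequences y^{(i)} *)
  (forall i, (1 <= i <= M)%N ->
     exists B : R, forall n, (1 <= n)%N -> `|y i n| <= B) ->
  (* (a) *)
  ((fun n => `|x n.+1 - x n| / lambda n) @ \oo --> 0 /\
   (fun n => `|x n.+1 - x n|) @ \oo --> 0) /\
  (* (b) *)
  (forall xb : H, S xb -> forall i, (1 <= i <= M)%N ->
     exists Q1 Q2 : R, [/\ 0 <= Q1, 0 <= Q2 &
       forall n, (1 <= n)%N ->
         `|w i.+1 n - xb| ^+ 2 <=
           `|w i n - xb| ^+ 2 + theta n * Q1 + alpha n * Q2
           - (1 - alpha n) * `|T i (y i n) - y i n| ^+ 2
           - `|z i n - y i n| ^+ 2
           + 2 * lambda n * (f i xb - f i (y i n))
           + 2 * lambda n * inner (d i n.+1) (y i n - xb)]).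
Proof.
move=> Hip M0 HA1 HA2 HA3 S psi HSne Hmin Hdec Hth Hla Hbe Hal Hrng C1 C2 C3 C4 C5 C6 C7
  Hd1 Hw1 Halg Hx Hyb.
have [p Sp] := HSne.
have Tp : forall i, (1 <= i <= M)%N -> T i p = p by move=> i hi; exact: Sp i hi.
have hM1 : (1 <= 1 <= M)%N by rewrite leqnn.
have hiM : forall i, (1 <= i <= M)%N -> (1 <= i <= M.+1)%N.
  by move=> i /andP [h1 h2]; rewrite h1 /=; apply: leqW.
have lpos : forall n, (1 <= n)%N -> 0 < lambda n.
  by move=> n hn; have [_ [? _] _ _] := Hrng n hn.
have apos : forall n, (1 <= n)%N -> 0 < alpha n <= 1.
  by move=> n hn; have [_ _ _ ?] := Hrng n hn.
have apos' : forall n, (1 <= n)%N -> 0 <= alpha n <= 1.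
  by move=> n hn; have /andP [a0 a1] := apos n hn; rewrite ltW.
have thpos : forall n, (1 <= n)%N -> 0 <= theta n <= 1.
  by move=> n hn; have [/andP [? ?] _ _ _] := Hrng n hn; apply/andP; split => //; apply: ltW.
have bpos : forall n, (1 <= n)%N -> 0 <= beta n.
  by move=> n hn; have [_ _ /andP [? _] _] := Hrng n hn; apply: ltW.
have [By hBy] : exists By, forall i, (1 <= i <= M)%N -> forall n, (1 <= n)%N -> `|y i n| <= By.
  apply: unif_R => // i B B' hB hP n hn; apply: le_trans (hP n hn) hB.
have By0 : 0 <= By by apply: le_trans (hBy 1%N hM1 1%N (leqnn _)).
set np := `|p|.
have np0 : 0 <= np := normr_ge0 p.
have hT : forall i, (1 <= i <= M)%N -> forall n, (1 <= n)%N -> `|T i (y i n)| <= By + 2 * np.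
  move=> i hi n hn.
  have h1 := firm_nonexp Hip (HA3 i hi) (y i n) p; rewrite Tp // in h1.
  have h2 := ler_normD (T i (y i n) - p) p; rewrite subrK in h2.
  have h3 := ler_normB (y i n) p.
  have h4 := hBy i hi n hn.
  rewrite /np; lra.
have [Bu hBu] : exists Bu, forall i, (1 <= i <= M)%N -> `|u i| <= Bu.
  apply: unif_R => [i B B' hB hP|i hi]; [exact: le_trans hP hB | by exists `|u i|].
have Bu0 : 0 <= Bu := le_trans (normr_ge0 _) (hBu 1%N hM1).
have [BW hBW] : exists B, forall i, (1 <= i <= M)%N -> forall n, `|w i.+1 n| <= B.
  apply: unif_R => [i B B' hB hP n|i hi]; first exact: le_trans (hP n) hB.
  exists (Num.max `|w i.+1 0%N| (Bu + (By + 2 * np))) => -[|n].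
    by rewrite le_max lexx.
  have [_ _ _ ->] := Halg n.+1 i (ltn0Sn _) hi.
  apply: le_trans (@norm_cc _ _ _ (u i) (T i (y i n.+1)) (apos' _ (ltn0Sn n))) _.
  rewrite le_max; apply/orP; right; apply: lerD; first exact: hBu.
  exact: hT.
have hBW0 : 0 <= BW := le_trans (normr_ge0 _) (hBW 1%N hM1 0%N).
set Bw := Num.max (Num.max BW `|x 1%N|) `|w 1%N 0%N|.
have hX : forall n, (1 <= n)%N -> `|x n| <= Bw.
  case=> // -[|n] _.
    by rewrite /Bw !le_max lexx ?orbT ?orTb.
  rewrite Hx // /Bw !le_max; apply/orP; left; apply/orP; left; apply: hBW; by rewrite M0 leqnn.
have hW : forall i, (1 <= i <= M.+1)%N -> forall n, `|w i n| <= Bw.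
  move=> [|[|i]] // hi n.
    case: n => [|n]; first by rewrite /Bw le_max lexx orbT.
    by rewrite Hw1 //; apply: hX.
  have hi' : (1 <= i.+1 <= M)%N by move: hi; rewrite /= ltnS.
  rewrite /Bw !le_max; apply/orP; left; apply/orP; left; exact: hBW.
have Bw0 : 0 <= Bw := le_trans (normr_ge0 _) (hX 1%N (leqnn _)).
split; last first.
  move=> xb Sxb i hi.
  exists (2 * (Bw + `|xb|) * (2 * Bw) + (2 * Bw) ^+ 2), (`|u i - xb| ^+ 2).
  split; first by apply: addr_ge0; [apply: mulr_ge0; [apply: mulr_ge0 => //; apply: addr_ge0 | apply: mulr_ge0] | apply: sqr_ge0].
    by apply: sqr_ge0.
  move=> n hn.
  have [hz hd hp hw] := Halg n i hn hi.
  exact: (stage_b Hip (HA1 i hi).2 (HA3 i hi) (Sxb i hi) hz hp hw (hW i (hiM i hi) n)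
    (hW i (hiM i hi) n.-1) (thpos n hn) (lpos n hn) (apos' n hn)).
have [sigma sig1 hsig] := C6.
have hZ : forall i, (1 <= i <= M)%N -> forall n, (1 <= n)%N -> `|z i n| <= 3 * Bw.
  move=> i hi n hn.
  have [-> _ _ _] := Halg n i hn hi.
  have /andP [t0 t1] := thpos n hn.
  apply: le_trans (ler_normD _ _) _; rewrite normrZ ger0_norm //.
  have h1 := hW i (hiM i hi) n; have h2 := hW i (hiM i hi) n.-1.
  have h3 : `|w i n - w i n.-1| <= 2 * Bw by apply: le_trans (ler_normB _ _) _; lra.
  have : theta n * `|w i n - w i n.-1| <= 1 * (2 * Bw) by apply: ler_pM.
  lra.
have [Bg hBg] : exists Bg, forall i, (1 <= i <= M)%N -> forall n, (1 <= n)%N ->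
    `|gradh i (z i n)| <= Bg.
  apply: unif_R => [i B B' hB hP n hn|i hi]; first exact: le_trans (hP n hn) hB.
  have [_ _ L0 lg] := HA2 i hi.
  exists (`|gradh i 0| + (L i)^-1 * (3 * Bw)) => n hn.
  have h1 := lg (z i n) 0; rewrite subr0 in h1.
  have h2 := ler_normD (gradh i (z i n) - gradh i 0) (gradh i 0); rewrite subrK in h2.
  have h3 : (L i)^-1 * `|z i n| <= (L i)^-1 * (3 * Bw).
    by apply: ler_wpM2l; [rewrite invr_ge0 ltW | exact: hZ].
  lra.
have Bg0 : 0 <= Bg := le_trans (normr_ge0 _) (hBg 1%N hM1 1%N (leqnn _)).
have h12 : (0 : R) < 2^-1 by rewrite invr_gt0.
have [Nb hNb] := ev_of_cvg0 Hbe h12.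
set N1 := maxn Nb 1.
have [Bd hBd] : exists Bd, forall i, (1 <= i <= M)%N -> forall n, (N1 <= n)%N ->
    `|d i n| <= Bd.
  apply: unif_R => [i B B' hB hP n hn|i hi]; first exact: le_trans (hP n hn) hB.
  exists (Num.max `|d i N1| (2 * Bg)).
  have key : forall k, `|d i (N1 + k)%N| <= Num.max `|d i N1| (2 * Bg).
    elim=> [|k IH]; first by rewrite addn0 le_max lexx.
    have n1 : (1 <= N1 + k)%N by apply: leq_trans (leq_maxr Nb 1) (leq_addr _ _).
    have nb : (Nb <= N1 + k)%N by apply: leq_trans (leq_maxl Nb 1) (leq_addr _ _).
    have [_ -> _ _] := Halg (N1 + k)%N i n1 hi.
    rewrite addnS.
    have [_ -> _ _] := Halg (N1 + k)%N i n1 hi.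
    apply: le_trans (ler_normD _ _) _; rewrite normrN normrZ.
    have h1 := hBg i hi _ n1.
    have h2 : `|beta (N1 + k)%N| * `|d i (N1 + k)%N| <= 2^-1 * Num.max `|d i N1| (2 * Bg).
      by apply: ler_pM => //; apply: hNb.
    have h3 : 2 * Bg <= Num.max `|d i N1| (2 * Bg) by rewrite le_max lexx orbT.
    lra.
  by move=> n hn; rewrite -(subnKC hn); apply: key.
have Bd0 : 0 <= Bd := le_trans (normr_ge0 _) (hBd 1%N hM1 N1 (leqnn _)).
have [Nl hNl] := ev_of_cvg0 Hla ltr01.
have [NL hNL] : exists N, forall i, (1 <= i <= M)%N -> forall n, (N <= n)%N ->
    lambda n * (L i)^-1 <= 1.
  apply: unif_N => [i N N' hN hP n hn|i hi]; first exact: hP n (leq_trans hN hn).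
  have [_ _ L0 _] := HA2 i hi.
  have [NLi hi'] := ev_of_cvg0 Hla L0.
  exists NLi => n hn.
  rewrite ler_pdivrMr // mul1r; exact: le_trans (ler_norm _) (hi' n hn).
set N0 := maxn (maxn N1 Nl) NL.
have hN0 : forall n, (N0 <= n)%N -> [/\ (1 <= n)%N, (N1 <= n)%N, (Nl <= n)%N & (NL <= n)%N].
  move=> n hn; have h1 : (N1 <= n)%N.
    by apply: leq_trans hn; apply: leq_trans (leq_maxl _ Nl) (leq_maxl _ NL).
  split => //.
  - exact: leq_trans (leq_maxr Nb 1) h1.
  - by apply: leq_trans hn; apply: leq_trans (leq_maxr N1 _) (leq_maxl _ NL).
  - by apply: leq_trans hn; apply: leq_maxr.
set Bay := 3 * Bw + Bd + By.
set BuT := Bu + (By + 2 * np).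
set E := fun n => BuT * `|alpha n.+1 - alpha n| + 2 * Bw * (theta n.+1 + theta n)
   + Bg * `|lambda n - lambda n.+1| + Bd * (lambda n.+1 * beta n.+1 + lambda n * beta n)
   + Bay * (`|lambda n - lambda n.+1| / lambda n).
have hstage : forall n, (N0 <= n)%N -> forall i, (1 <= i <= M)%N ->
    `|w i.+1 n.+1 - w i.+1 n| <= (1 - alpha n.+1) * `|w i n.+1 - w i n| + E n.
  move=> n hn i hi.
  have [n1 nN1 nNl nNL] := hN0 n hn.
  have [hz1 hd2 hp1 hw1] := Halg n.+1 i (ltn0Sn _) hi.
  have [hz0 hd1 hp0 hw0] := Halg n i n1 hi.
  have [ch fg L0 lg] := HA2 i hi.
  have bay : `|z i n + lambda n *: d i n.+1 - y i n| <= Bay.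
    apply: le_trans (ler_normB _ _) _.
    apply: le_trans (lerD (ler_normD _ _) (lexx _)) _.
    rewrite normrZ.
    have l1 : `|lambda n| <= 1 := hNl n nNl.
    have h1 : `|lambda n| * `|d i n.+1| <= 1 * Bd.
      by apply: ler_pM => //; apply: hBd => //; apply: leqW.
    have := hZ i hi n n1; have := hBy i hi n n1.
    rewrite /Bay; lra.
  have bu : `|u i - T i (y i n)| <= BuT.
    apply: le_trans (ler_normB _ _) _; apply: lerD; [exact: hBu | exact: hT].
  have /andP [t1 _] := thpos n.+1 (ltn0Sn _).
  have /andP [t0 _] := thpos n n1.
  have K0 : 0 < (L i)^-1 by rewrite invr_gt0.
  exact: (one_stage Hip (HA1 i hi).2 ch fg K0 lg (HA3 i hi) hz1 hz0 hd2 hd1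
    hp1 hp0 hw1 hw0 (hW i (hiM i hi) n.+1) (hW i (hiM i hi) n) (hW i (hiM i hi) n.-1)
    (hBg i hi n n1) (hBd i hi n.+1 (leqW nN1)) (hBd i hi n nN1) bay bu t1 t0
    (bpos n.+1 (ltn0Sn _)) (bpos n n1) (lpos n.+1 (ltn0Sn _)) (lpos n n1)
    (hNL i hi n.+1 (leqW nNL)) (apos' n.+1 (ltn0Sn _))).
have hE0 : forall n, (N0 <= n)%N -> 0 <= E n.
  move=> n hn; have [n1 _ _ _] := hN0 n hn.
  have l1 := lpos n.+1 (ltn0Sn _); have l0 := lpos n n1.
  have b1 := bpos n.+1 (ltn0Sn _); have b0 := bpos n n1.
  have /andP [t1 _] := thpos n.+1 (ltn0Sn _).
  have /andP [t0 _] := thpos n n1.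
  have Bay0 : 0 <= Bay by rewrite /Bay; lra.
  have BuT0 : 0 <= BuT by rewrite /BuT; lra.
  rewrite /E; repeat apply: addr_ge0; apply: mulr_ge0 => //; try lra.
  - by apply: addr_ge0; apply: mulr_ge0 => //; apply: ltW.
  - by apply: divr_ge0 => //; apply: ltW.
have hchain : forall n, (N0 <= n)%N -> forall k, (1 <= k <= M)%N ->
    `|w k.+1 n.+1 - w k.+1 n| <= (1 - alpha n.+1) * `|x n.+1 - x n| + k%:R * E n.
  move=> n hn; have [n1 _ _ _] := hN0 n hn.
  elim=> [|k IH] hk; first by [].
  have hE := hE0 n hn.
  have /andP [a0 a1] := apos' n.+1 (ltn0Sn _).
  case: k IH hk => [|k] IH hk.
    by have := hstage n hn 1%N hM1; rewrite !Hw1 // mul1r.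
  have hk' : (1 <= k.+1 <= M)%N by move: hk => /andP [_ hh]; rewrite /= ltnW.
  have h1 := IH hk'.
  have h2 := hstage n hn k.+2 hk.
  have D0 : 0 <= `|x n.+1 - x n| by [].
  have k0 : 0 <= k.+1%:R :> R by [].
  rewrite -natr1.
  have h3 : (1 - alpha n.+1) * `|w k.+2 n.+1 - w k.+2 n| <=
      (1 - alpha n.+1) * ((1 - alpha n.+1) * `|x n.+1 - x n| + k.+1%:R * E n).
    by apply: ler_wpM2l => //; lra.
  have h4 : (1 - alpha n.+1) * ((1 - alpha n.+1) * `|x n.+1 - x n|) <= (1 - alpha n.+1) * `|x n.+1 - x n|.
    rewrite mulrA; apply: ler_wpM2r => //.
    have : (1 - alpha n.+1) * (1 - alpha n.+1) <= (1 - alpha n.+1) * 1.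
      by apply: ler_wpM2l; lra.
    lra.
  have h5 : (1 - alpha n.+1) * (k.+1%:R * E n) <= k.+1%:R * E n.
    rewrite -[X in _ <= X]mul1r; apply: ler_wpM2r; [exact: mulr_ge0 | lra].
  lra.
have hrec : forall n, (N0 <= n)%N ->
    `|x n.+2 - x n.+1| <= (1 - alpha n.+1) * `|x n.+1 - x n| + M%:R * E n.
  move=> n hn; have [n1 _ _ _] := hN0 n hn.
  have := hchain n hn M; rewrite -Hx // -Hx //; apply.
  by rewrite M0 leqnn.
have hq : (fun n => `|x n.+1 - x n| / lambda n) @ \oo --> 0.
  apply: (@xu _ _ alpha 1%N) => [n hn|n hn|N B hN|e e0].
  - by apply: divr_ge0 => //; apply: ltW; apply: lpos.
  - exact: apos.
  - apply: (@diverge _ alpha _ C1 N B hN) => k hk; have /andP [+ _] := apos k hk; apply: ltW.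
  - set Ktot := 2 * Bw + M%:R * (BuT + 4 * Bw + Bg + Bd * (1 + sigma) + Bay).
    have Bay0 : 0 <= Bay by rewrite /Bay; lra.
    have BuT0 : 0 <= BuT by rewrite /BuT; lra.
    have sg0 : 0 <= 1 + sigma by lra.
    have Kt0 : 0 <= Ktot.
      rewrite /Ktot; apply: addr_ge0; first lra.
      apply: mulr_ge0 => //; repeat apply: addr_ge0 => //; try lra.
      exact: mulr_ge0.
    set del := e / (Ktot + 1).
    have del0 : 0 < del by rewrite divr_gt0 // ltr_wpDl.
    have [N2 h2] := ev_of_cvg0 C2 del0.
    have [N3 h3] := ev_of_cvg0 C3 del0.
    have [N5 h5] := ev_of_cvg0 C5 del0.
    have [N7 h7] := ev_of_cvg0 C7 del0.
    exists (maxn (maxn N0 N2) (maxn N3 (maxn N5 N7))) => n hn.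
    have hn0 : (N0 <= n)%N.
      by apply: leq_trans hn; apply: leq_trans (leq_maxl _ N2) (leq_maxl _ _).
    have hn2 : (N2 <= n)%N.
      by apply: leq_trans hn; apply: leq_trans (leq_maxr N0 _) (leq_maxl _ _).
    have hn3 : (N3 <= n)%N.
      by apply: leq_trans hn; apply: leq_trans (leq_maxl N3 _) (leq_maxr _ _).
    have hn5 : (N5 <= n)%N.
      apply: leq_trans hn; apply: leq_trans (leq_maxr (maxn N0 N2) _).
      by apply: leq_trans (leq_maxl N5 N7) (leq_maxr _ _).
    have hn7 : (N7 <= n)%N.
      apply: leq_trans hn; apply: leq_trans (leq_maxr (maxn N0 N2) _).
      by apply: leq_trans (leq_maxr N5 N7) (leq_maxr _ _).
    have [n1 _ nNl _] := hN0 n hn0.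
    have [dth dla dbe dal] := Hdec n n1.
    have /andP [t1 _] := thpos n.+1 (ltn0Sn _).
    have /andP [a1 a1'] := apos n.+1 (ltn0Sn _).
    have D0 : 0 <= `|x n.+1 - x n| by [].
    have D2 : `|x n.+1 - x n| <= 2 * Bw.
      apply: le_trans (ler_normB _ _) _.
      have := hX n.+1 (ltn0Sn _); have := hX n n1; lra.
    have hr := recur (lpos n.+1 (ltn0Sn _)) (lpos n n1) a1 a1'
      (proj1 (andP (apos n n1))) t1 dth (bpos n.+1 (ltn0Sn _)) dbe (hsig n n1) D0 D2
      (ler0n _ M) BuT0 Bw0 Bg0 Bd0 Bay0 (hrec n hn0).
    apply: le_trans hr _; rewrite lerD2l [X in _ <= X]mulrC; apply: ler_wpM2l; first exact: ltW.
    set t1' := (alpha n.+1)^-1 * `|(lambda n.+1)^-1 - (lambda n)^-1|.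
    have t10 : 0 <= t1' by rewrite /t1' mulr_ge0 // invr_ge0 ltW.
    have e1 : t1' <= del := le_trans (ler_norm _) (h2 n hn2).
    have e2 := le_trans (ler_norm _) (h3 n hn3).
    have e3 := le_trans (ler_norm _) (h5 n hn5).
    have e4 := le_trans (ler_norm _) (h7 n hn7).
    have e5 : lambda n * t1' <= del.
      apply: le_trans e1; rewrite -[X in _ <= X]mul1r; apply: ler_wpM2r => //.
      exact: le_trans (ler_norm _) (hNl n nNl).
    have f1 : 2 * Bw * t1' <= 2 * Bw * del by apply: ler_wpM2l => //; lra.
    have f2 : M%:R * (BuT * ((lambda n.+1)^-1 * `|1 - alpha n / alpha n.+1|) +
       4 * Bw * (theta n / (alpha n.+1 * lambda n.+1)) + Bg * (lambda n * t1') +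
       Bd * (1 + sigma) * (beta n / alpha n.+1) + Bay * t1') <=
       M%:R * (BuT * del + 4 * Bw * del + Bg * del + Bd * (1 + sigma) * del + Bay * del).
      apply: ler_wpM2l => //.
      have g1 : BuT * ((lambda n.+1)^-1 * `|1 - alpha n / alpha n.+1|) <= BuT * del.
        exact: ler_wpM2l.
      have g2 : 4 * Bw * (theta n / (alpha n.+1 * lambda n.+1)) <= 4 * Bw * del.
        by apply: ler_wpM2l => //; lra.
      have g3 : Bg * (lambda n * t1') <= Bg * del by apply: ler_wpM2l.
      have g4 : Bd * (1 + sigma) * (beta n / alpha n.+1) <= Bd * (1 + sigma) * del.
        by apply: ler_wpM2l => //; apply: mulr_ge0.
      have g5 : Bay * t1' <= Bay * del by apply: ler_wpM2l.
      lra.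
    have f3 : 2 * Bw * del + M%:R * (BuT * del + 4 * Bw * del + Bg * del + Bd * (1 + sigma) * del + Bay * del)
       = Ktot * del by rewrite /Ktot; ring.
    have f4 : Ktot * del <= e.
      rewrite /del mulrA ler_pdivrMr ?ltr_wpDl //.
      have : 0 <= e by apply: ltW.
      nra.
    rewrite -/t1'; lra.
split; first exact: hq.
apply: cvg0_of_ev => e e0.
have [Nq hNq] := ev_of_cvg0 hq e0.
exists (maxn (maxn Nq Nl) 1) => n hn.
have hnq : (Nq <= n)%N by apply: leq_trans hn; apply: leq_trans (leq_maxl _ Nl) (leq_maxl _ _).
have hnl : (Nl <= n)%N by apply: leq_trans hn; apply: leq_trans (leq_maxr Nq _) (leq_maxl _ _).
have hn1 : (1 <= n)%N by apply: leq_trans hn; apply: leq_maxr.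
have l0 := lpos n hn1.
have q1 := hNq n hnq.
rewrite ger0_norm // in q1.
  rewrite normr_id -(divfK (lt0r_neq0 l0) `|x n.+1 - x n|).
  have l1 : lambda n <= 1 := le_trans (ler_norm _) (hNl n hnl).
  have : `|x n.+1 - x n| / lambda n * lambda n <= e * 1.
    by apply: ler_pM => //; [apply: divr_ge0 => //; apply: ltW | apply: ltW].
  by rewrite mulr1.
by apply: divr_ge0 => //; apply: ltW.
Qed.
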